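(* For $p+q\ge4$, $HL^0(\mathfrak h_{p,q};\mathfrak h_{p,q})=0$ and $HL^1(\mathfrak h_{p,q};\mathfrak h_{p,q})=\langle I\rangle$ (one-dimensional), where $I:\mathfrak h_{p,q}\to\mathfrak h_{p,q}$ is the linear map with $I(\alpha_{ij})=0$, $I(\beta_{ij})=0$ and $I(\partial_i)=\partial_i$ for $i=1,\dots,n$.
   Context: Let $p,q$ be nonnegative integers, $n=p+q$. On $\mathbf R^n$ write $\partial_i=\partial/\partial x^i$; $\alpha_{ij}=x_i\partial_j-x_j\partial_i$ ($1\le i<j\le p$ or $p+1\le i<j\le n$), $\beta_{ij}=x_i\partial_j+x_j\partial_i$ ($1\le i\le p<j\le n$); $\mathfrak h_{p,q}$ is the Lie algebra of vector fields with basis $\{\alpha_{ij}\}\cup\{\beta_{ij}\}\cup\{\partial_i\}$. For a Leibniz (e.g. Lie) algebra $\mathfrak g$ and representation $V$ (here $V=\mathfrak g$ with the bracket), $HL^*(\mathfrak g;V)$ is the cohomology of $CL^k=\mathrm{Hom}(\mathfrak g^{\otimes k},V)$ with coboundary $\delta f(g_1\otimes\cdots\otimes g_{k+1})=[g_1,f(g_2\otimes\cdots\otimes g_{k+1})]+\sum_{i=2}^{k+1}(-1)^i[f(g_1\otimes\cdots\widehat{g_i}\cdots\otimes g_{k+1}),g_i]+\sum_{1\le i<j\le k+1}(-1)^{j+1}f(g_1\otimes\cdots\otimes g_{i-1}\otimes[g_i,g_j]\otimes\cdots\widehat{g_j}\cdots\otimes g_{k+1})$. *)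

(* Defs.v *)
From HB Require Import structures.
From mathcomp Require Import all_boot all_algebra.
From mathcomp Require Import mpoly.
From mathcomp Require Import reals.
Set Implicit Arguments. Unset Strict Implicit. Unset Printing Implicit Defensive.
Import GRing.Theory.
Local Open Scope ring_scope.

(* A polynomial vector field  X = sum_k X_k d_k  on R^n, X_k in R[x_1..x_n]. *)
Definition VF (R : realType) (n : nat) := {ffun 'I_n -> {mpoly R[n]}}.

Definition vf_bracket (R : realType) (n : nat) (X Y : VF R n) : VF R n :=
  [ffun k => \sum_(j < n) (X j * mderiv j (Y k) - Y j * mderiv j (X k))].

Definition vf_scale (R : realType) (n : nat) (a : R) (X : VF R n) : VF R n :=
  [ffun k => a *: X k].
Definition vf_add (R : realType) (n : nat) (X Y : VF R n) : VF R n :=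
  [ffun k => X k + Y k].
Definition vf_sub (R : realType) (n : nat) (X Y : VF R n) : VF R n :=
  [ffun k => X k - Y k].
Definition vf_zero (R : realType) (n : nat) : VF R n := [ffun k => 0].

Definition vf_partial (R : realType) (n : nat) (i : 'I_n) : VF R n :=
  [ffun k => ((k == i)%:R : {mpoly R[n]})].
Definition vf_alpha (R : realType) (n : nat) (i j : 'I_n) : VF R n :=
  [ffun k => (k == j)%:R * 'X_i - (k == i)%:R * 'X_j].
Definition vf_beta (R : realType) (n : nat) (i j : 'I_n) : VF R n :=
  [ffun k => (k == j)%:R * 'X_i + (k == i)%:R * 'X_j].

(* Index conventions (0-based): coordinates 0..p-1 form the first block,
   p..n-1 the second block (paper: 1..p and p+1..n). *)
Definition alpha_index (p : nat) (n : nat) (i j : 'I_n) : bool :=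
  (i < j)%N && (((j < p)%N) || ((p <= i)%N)).
Definition beta_index (p : nat) (n : nat) (i j : 'I_n) : bool :=
  (i < p)%N && (p <= j)%N.

Definition hpq_basis (R : realType) (p q : nat) : seq (VF R (p + q)) :=
  [seq vf_alpha R ij.1 ij.2 | ij <- enum [pred ij : 'I_(p+q) * 'I_(p+q) |
                                             alpha_index p ij.1 ij.2]]
  ++ [seq vf_beta R ij.1 ij.2 | ij <- enum [pred ij : 'I_(p+q) * 'I_(p+q) |
                                             beta_index p ij.1 ij.2]]
  ++ [seq vf_partial R i | i <- enum 'I_(p+q)].

Definition in_hpq (R : realType) (p q : nat) (X : VF R (p + q)) : Prop :=
  exists c : nat -> R,
    X = \big[@vf_add R (p+q)/vf_zero R (p+q)]_(k < size (hpq_basis R p q))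
          vf_scale (c k) (nth (vf_zero R (p+q)) (hpq_basis R p q) k).

(* 1-cochains CL^1 = Hom(h, h): maps that send h to h and are linear on h
   (values outside h are irrelevant; all conditions below are restricted to h). *)
Definition is_cochain1 (R : realType) (p q : nat) (f : VF R (p+q) -> VF R (p+q)) : Prop :=
  (forall X, in_hpq X -> in_hpq (f X)) /\
  (forall (a : R) X Y, in_hpq X -> in_hpq Y ->
     f (vf_add (vf_scale a X) Y) = vf_add (vf_scale a (f X)) (f Y)).

Definition delta0 (R : realType) (n : nat) (x : VF R n) (g : VF R n) : VF R n :=
  vf_bracket g x.

Definition delta1 (R : realType) (n : nat) (f : VF R n -> VF R n) (g1 g2 : VF R n)
  : VF R n :=
  vf_sub (vf_add (vf_bracket g1 (f g2)) (vf_bracket (f g1) g2)) (f (vf_bracket g1 g2)).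

(* Main.v *)
Require Import Defs.
From HB Require Import structures.
From mathcomp Require Import all_boot all_algebra.
From mathcomp Require Import mpoly.
From mathcomp Require Import reals.
From mathcomp Require Import ring lra zify.
Set Implicit Arguments. Unset Strict Implicit. Unset Printing Implicit Defensive.
Import GRing.Theory Num.Theory.
Local Open Scope ring_scope.

Lemma vf_addE (R : realType) n (X Y : VF R n) : vf_add X Y = X + Y.
Proof. by apply/ffunP=> k; rewrite !ffunE. Qed.
Lemma vf_scaleE (R : realType) n a (X : VF R n) : vf_scale a X = a *: X.
Proof. by apply/ffunP=> k; rewrite !ffunE. Qed.
Lemma vf_zeroE (R : realType) n : vf_zero R n = 0.
Proof. by apply/ffunP=> k; rewrite !ffunE. Qed.
Lemma vf_subE (R : realType) n (X Y : VF R n) : vf_sub X Y = X - Y.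
Proof. by apply/ffunP=> k; rewrite !ffunE. Qed.
Lemma dX (R : realType) n (i j : 'I_n) : mderiv j ('X_i : {mpoly R[n]}) = (i == j)%:R%:MP.
Proof.
rewrite mderivX mnm1E; have [->|ne] := eqVneq i j.
  have -> : (U_(j) - U_(j) = 0)%MM by apply/mnmP=> k; rewrite mnmBE mnm0E subnn.
  by rewrite mpolyX0 scale1r.
by rewrite scale0r.
Qed.

Definition aff (R : realType) n (a : 'I_n -> R) (M : 'I_n -> 'I_n -> R) : VF R n :=
  [ffun k => (a k)%:MP + \sum_(l < n) M k l *: 'X_l].

Definition cst (R : realType) n (X : VF R n) (k : 'I_n) : R := mcoeff 0%MM (X k).
Definition lin (R : realType) n (X : VF R n) (k l : 'I_n) : R := mcoeff U_(l)%MM (X k).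

Lemma aff_cst (R : realType) n a M (k : 'I_n) : cst (@aff R n a M) k = a k.
Proof.
rewrite /cst ffunE mcoeffD mcoeffC eqxx mulr1 raddf_sum /= big1 ?addr0 // => l _.
by rewrite mcoeffZ mcoeffX mnm1_eq0 mulr0.
Qed.

Lemma aff_lin (R : realType) n a M (k l : 'I_n) : lin (@aff R n a M) k l = M k l.
Proof.
rewrite /lin ffunE mcoeffD mcoeffC mnm1_eq0 mulr0 add0r raddf_sum /=.
rewrite (bigD1 l) //= big1 ?addr0 => [|m hm]; rewrite mcoeffZ mcoeffXU ?eqxx ?mulr1 //.
by rewrite (negbTE hm) mulr0.
Qed.

Lemma aff_inj (R : realType) n a M b N : @aff R n a M = aff b N -> a =1 b /\ M =2 N.
Proof.
move=> e; split=> [k|k l].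
  by rewrite -(aff_cst a M) -(aff_cst b N) e.
by rewrite -(aff_lin a M) -(aff_lin b N) e.
Qed.

Lemma aff_ext (R : realType) n a M b N : a =1 b -> M =2 N -> @aff R n a M = aff b N.
Proof.
move=> ea eM; apply/ffunP=> k; rewrite !ffunE ea; congr (_ + _).
by apply: eq_bigr=> l _; rewrite eM.
Qed.

Lemma aff_sum (R : realType) n (T : Type) (r : seq T) (P : pred T) A B :
  \sum_(u <- r | P u) @aff R n (A u) (B u) =
  aff (fun k => \sum_(u <- r | P u) A u k) (fun k l => \sum_(u <- r | P u) B u k l).
Proof.
apply/ffunP=> k; rewrite sum_ffunE ffunE.
under eq_bigr do rewrite ffunE.
rewrite big_split /= raddf_sum; congr (_ + _).
rewrite exchange_big /=; apply: eq_bigr=> l _.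
by rewrite scaler_suml.
Qed.

Lemma aff_add (R : realType) n a M b N :
  @aff R n a M + aff b N = aff (fun k => a k + b k) (fun k l => M k l + N k l).
Proof.
apply/ffunP=> k; rewrite !ffunE raddfD /= -!addrA; congr (_ + _).
by rewrite addrCA -big_split /=; congr (_ + _); apply: eq_bigr => l _; rewrite scalerDl.
Qed.

Lemma aff_scale (R : realType) n c a M :
  c *: @aff R n a M = aff (fun k => c * a k) (fun k l => c * M k l).
Proof.
apply/ffunP=> k; rewrite !ffunE scalerDr mpolyCM mul_mpolyC scaler_sumr; congr (_ + _).
by apply: eq_bigr => l _; rewrite scalerA.
Qed.

Lemma aff0 (R : realType) n : @aff R n (fun _ => 0) (fun _ _ => 0) = 0.
Proof.
apply/ffunP=> k; rewrite !ffunE big1 ?addr0 // => l _; by rewrite scale0r.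
Qed.

Lemma daff (R : realType) n (c : R) (m : 'I_n -> R) (j : 'I_n) :
  mderiv j (c%:MP + \sum_(l < n) m l *: ('X_l : {mpoly R[n]})) = (m j)%:MP.
Proof.
rewrite mderivD mderivC add0r linear_sum /=.
rewrite (bigD1 j) //= big1 ?addr0 => [|l hl]; rewrite mderivZ dX.
  by rewrite eqxx -mul_mpolyC -mpolyCM mulr1.
by rewrite (negbTE hl) scaler0.
Qed.

Lemma comb (R : realType) n (w a : 'I_n -> R) (M : 'I_n -> 'I_n -> R) :
  \sum_j w j *: ((a j)%:MP + \sum_l M j l *: 'X_l) =
  (\sum_j w j * a j)%:MP + \sum_l (\sum_j w j * M j l) *: ('X_l : {mpoly R[n]}).
Proof.
under eq_bigr do rewrite scalerDr scaler_sumr.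
rewrite big_split /= raddf_sum /=; congr (_ + _).
  by apply: eq_bigr=> j _; rewrite mpolyCM mul_mpolyC.
rewrite exchange_big /=; apply: eq_bigr=> l _.
by rewrite scaler_suml; apply: eq_bigr=> j _; rewrite scalerA.
Qed.

Lemma bracket_aff (R : realType) n a M b N :
  vf_bracket (@aff R n a M) (aff b N) =
  aff (fun k => \sum_j (N k j * a j - M k j * b j))
      (fun k l => \sum_j (N k j * M j l - M k j * N j l)).
Proof.
apply/ffunP=> k; rewrite !ffunE.
under eq_bigr do rewrite !daff mulrC mul_mpolyC [X in _ - X]mulrC mul_mpolyC !ffunE.
rewrite sumrB !comb.
rewrite (@sumrB R) raddfB /=.
have -> : \sum_(l<n) (\sum_j (N k j * M j l - M k j * N j l)) *: ('X_l : {mpoly R[n]}) =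
   \sum_l (\sum_j N k j * M j l) *: 'X_l - \sum_l (\sum_j M k j * N j l) *: 'X_l.
  by rewrite -sumrB; apply: eq_bigr=> l _; rewrite (@sumrB R) scalerBl.
by rewrite opprD addrACA.
Qed.

Lemma bracketL (R : realType) n c (X Y Z : VF R n) :
  vf_bracket (c *: X + Y) Z = c *: vf_bracket X Z + vf_bracket Y Z.
Proof.
apply/ffunP=> k; rewrite !ffunE scaler_sumr -big_split /=; apply: eq_bigr=> j _.
rewrite !ffunE mderivD mderivZ mulrDl mulrDr -scalerAl -scalerAr scalerBr.
by rewrite opprD addrACA.
Qed.

Lemma bigvf (R : realType) n m (G : nat -> VF R n) :
  \big[@vf_add R n/vf_zero R n]_(k < m) G k = \sum_(k < m) G k.
Proof.
elim: m => [|m IH]; first by rewrite !big_ord0 vf_zeroE.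
by rewrite !big_ord_recr /= IH -vf_addE.
Qed.

Lemma in_hpqE (R : realType) p q (X : VF R (p + q)) :
  in_hpq X <-> exists c : nat -> R,
    X = \sum_(k < size (hpq_basis R p q)) c k *: nth 0 (hpq_basis R p q) k.
Proof.
rewrite /in_hpq; split=> -[c e]; exists c; rewrite e
  (bigvf _ (fun k => vf_scale (c k) (nth (vf_zero R (p+q)) (hpq_basis R p q) k))) vf_zeroE;
  by apply: eq_bigr => k _; rewrite vf_scaleE.
Qed.

Lemma in_hpq0 (R : realType) p q : @in_hpq R p q 0.
Proof. by apply/in_hpqE; exists (fun _ => 0); rewrite big1 // => k _; rewrite scale0r. Qed.

Lemma in_hpq_lin (R : realType) p q c (X Y : VF R (p + q)) :
  in_hpq X -> in_hpq Y -> in_hpq (c *: X + Y).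
Proof.
move=> /in_hpqE [a ->] /in_hpqE [b ->]; apply/in_hpqE; exists (fun k => c * a k + b k).
rewrite scaler_sumr -big_split /=; apply: eq_bigr => k _.
by rewrite scalerDl scalerA.
Qed.

Lemma in_hpqD (R : realType) p q (X Y : VF R (p + q)) :
  in_hpq X -> in_hpq Y -> in_hpq (X + Y).
Proof. by move=> hX hY; rewrite -[X]scale1r; apply: in_hpq_lin. Qed.

Lemma in_hpqZ (R : realType) p q c (X : VF R (p + q)) :
  in_hpq X -> in_hpq (c *: X).
Proof. by move=> hX; rewrite -[_ *: _]addr0; apply: in_hpq_lin => //; apply: in_hpq0. Qed.

Lemma in_hpq_sum (R : realType) p q (T : Type) (r : seq T) (P : pred T) (G : T -> VF R (p + q)) :
  (forall u, P u -> in_hpq (G u)) -> in_hpq (\sum_(u <- r | P u) G u).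
Proof.
move=> h; apply: (big_ind (@in_hpq R p q)) => //; first exact: in_hpq0.
exact: in_hpqD.
Qed.

Lemma in_hpq_mem (R : realType) p q (X : VF R (p + q)) :
  X \in hpq_basis R p q -> in_hpq X.
Proof.
move=> hX; apply/in_hpqE; exists (fun k => (k == index X (hpq_basis R p q))%:R).
have hi : (index X (hpq_basis R p q) < size (hpq_basis R p q))%N by rewrite index_mem.
rewrite (bigD1 (Ordinal hi)) //= eqxx scale1r nth_index //.
rewrite big1 ?addr0 // => k hk.
have -> : (k == index X (hpq_basis R p q) :> nat) = false.
  apply/negbTE; apply: contra hk => /eqP e; apply/eqP/val_inj => /=; exact: e.
by rewrite scale0r.
Qed.

Definition sg (R : realType) (p : nat) n (k : 'I_n) : R := if (k < p)%N then 1 else -1.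
Definition socond (R : realType) p n (M : 'I_n -> 'I_n -> R) :=
  forall k l, M k l = - (sg R p k * sg R p l * M l k).
Definition Ngen (R : realType) n (i j : 'I_n) (t : R) :=
  fun k l : 'I_n => (k == j)%:R * (l == i)%:R + t * ((k == i)%:R * (l == j)%:R) : R.
Definition ev (R : realType) n (i : 'I_n) := fun k : 'I_n => ((k == i)%:R : R).
Definition z1 (R : realType) n := fun _ : 'I_n => (0 : R).
Definition z2 (R : realType) n := fun _ _ : 'I_n => (0 : R).
Arguments z1 R n : clear implicits.
Arguments z2 R n : clear implicits.

Lemma sg2 (R : realType) p n (k : 'I_n) : sg R p k * sg R p k = 1.
Proof. by rewrite /sg; case: ifP => _; rewrite ?mulr1 ?mulrNN ?mulr1. Qed.

Lemma sum_delta (R : realType) n (c : R) (i : 'I_n) :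
  \sum_l (c * (l == i)%:R) *: ('X_l : {mpoly R[n]}) = c *: 'X_i.
Proof.
rewrite (bigD1 i) //= eqxx mulr1 big1 ?addr0 // => l hl.
by rewrite (negbTE hl) mulr0 scale0r.
Qed.

Lemma Ngen_affE (R : realType) n (i j k : 'I_n) (t : R) :
  aff (z1 R n) (Ngen i j t) k = (k == j)%:R * 'X_i + t *: ((k == i)%:R * 'X_j).
Proof.
rewrite ffunE /z1 mpolyC0 add0r /Ngen.
under eq_bigr do rewrite scalerDl mulrA.
rewrite big_split /= !sum_delta.
by case: (k == j); case: (k == i); rewrite ?mul1r ?mul0r ?mulr1 ?mulr0 ?scale1r ?scale0r ?scaler0.
Qed.

Lemma partial_aff (R : realType) n (i : 'I_n) : vf_partial R i = aff (ev R i) (z2 R n).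
Proof.
apply/ffunP=> k; rewrite !ffunE /ev /z2 big1 ?addr0 => [|l _]; last by rewrite scale0r.
by case: (k == i); rewrite ?mpolyC1 ?mpolyC0.
Qed.

Lemma alpha_aff (R : realType) n (i j : 'I_n) : vf_alpha R i j = aff (z1 R n) (Ngen i j (-1)).
Proof. by apply/ffunP=> k; rewrite Ngen_affE ffunE scaleN1r. Qed.

Lemma beta_aff (R : realType) n (i j : 'I_n) : vf_beta R i j = aff (z1 R n) (Ngen i j 1).
Proof. by apply/ffunP=> k; rewrite Ngen_affE ffunE scale1r. Qed.

Ltac dcase := repeat match goal with |- context [(?x == ?y)] =>
   case: (@eqP _ x y) => [?|?]; try subst; try congruence end.

Lemma socond_z2 (R : realType) p n : socond p (z2 R n).
Proof. by move=> k l; rewrite /z2 mulr0 oppr0. Qed.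

Lemma socond_Ngen (R : realType) p n (i j : 'I_n) :
  socond p (Ngen i j (- (sg R p i * sg R p j))).
Proof.
move=> k l; rewrite /Ngen; dcase; rewrite ?mulr0 ?mulr1 ?mul0r ?addr0 ?add0r;
  rewrite /sg; repeat case: ifP => _; rewrite /=; ring.
Qed.

Lemma sg_alpha (R : realType) p n (i j : 'I_n) : alpha_index p i j -> sg R p i * sg R p j = 1.
Proof.
rewrite /alpha_index /sg => /andP [hij /orP [hj|hi]].
  by rewrite hj (ltn_trans hij hj) mulr1.
by rewrite ltnNge hi /= ltnNge (leq_trans hi (ltnW hij)) /= mulrNN mulr1.
Qed.

Lemma sg_beta (R : realType) p n (i j : 'I_n) : beta_index p i j -> sg R p i * sg R p j = -1.
Proof. by rewrite /beta_index /sg => /andP [hi hj]; rewrite hi ltnNge hj /= mul1r. Qed.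

Lemma socond_add (R : realType) p n (M N : 'I_n -> 'I_n -> R) :
  socond p M -> socond p N -> socond p (fun k l => M k l + N k l).
Proof. by move=> hM hN k l; rewrite hM hN mulrDr opprD. Qed.

Lemma socond_scale (R : realType) p n c (M : 'I_n -> 'I_n -> R) :
  socond p M -> socond p (fun k l => c * M k l).
Proof. by move=> hM k l; rewrite hM mulrN mulrCA. Qed.

Lemma mem_B_aff (R : realType) p q (X : VF R (p + q)) :
  X \in hpq_basis R p q -> exists a M, socond p M /\ X = aff a M.
Proof.
rewrite /hpq_basis !mem_cat => /or3P [/mapP [ij hij ->]|/mapP [ij hij ->]|/mapP [i hi ->]].
- move: hij; rewrite mem_enum inE => h; exists (z1 R _), (Ngen ij.1 ij.2 (- (sg R p ij.1 * sg R p ij.2))).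
  by split; [apply: socond_Ngen | rewrite alpha_aff sg_alpha].
- move: hij; rewrite mem_enum inE => h; exists (z1 R _), (Ngen ij.1 ij.2 (- (sg R p ij.1 * sg R p ij.2))).
  by split; [apply: socond_Ngen | rewrite beta_aff sg_beta // opprK].
- by exists (ev R i), (z2 R _); split; [apply: socond_z2 | apply: partial_aff].
Qed.

Lemma in_hpq_aff (R : realType) p q (X : VF R (p + q)) :
  in_hpq X -> socond p (lin X) /\ X = aff (cst X) (lin X).
Proof.
move=> /in_hpqE [c ->].
have : exists a M, socond p M /\
   \sum_(k < size (hpq_basis R p q)) c k *: nth 0 (hpq_basis R p q) k = aff a M.
  apply: (big_ind (fun Y => exists a M, socond p M /\ Y = aff a M)).
  - by exists (z1 R _), (z2 R _); split; [apply: socond_z2|rewrite aff0].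
  - move=> _ _ [a [M [hM ->]]] [b [N [hN ->]]].
    by exists (fun k => a k + b k), (fun k l => M k l + N k l); split;
      [apply: socond_add | rewrite aff_add].
  - move=> k _; have /mem_B_aff [a [M [hM ->]]] : nth 0 (hpq_basis R p q) k \in hpq_basis R p q.
      exact: mem_nth.
    by exists (fun j => c k * a j), (fun j l => c k * M j l); split;
      [apply: socond_scale | rewrite aff_scale].
move=> [a [M [hM ->]]].
have ec := aff_cst a M; have el := aff_lin a M.
split; first by move=> k l; rewrite !el.
by apply: aff_ext => [k|k l]; rewrite ?ec ?el.
Qed.

Definition Lg (R : realType) p n (i j : 'I_n) : VF R n :=
  aff (z1 R n) (Ngen i j (- (sg R p i * sg R p j))).

Lemma sum_d (R : realType) n (f : 'I_n -> R) (l : 'I_n) : \sum_i f i * (i == l)%:R = f l.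
Proof.
rewrite (bigD1 l) //= eqxx mulr1 big1 ?addr0 // => i hi; by rewrite (negbTE hi) mulr0.
Qed.

Lemma Lg_swap (R : realType) p n (i j : 'I_n) :
  Lg R p i j = (- (sg R p i * sg R p j)) *: Lg R p j i.
Proof.
rewrite /Lg aff_scale; apply: aff_ext => [k|k l]; first by rewrite /z1 mulr0.
rewrite /Ngen; dcase; rewrite /sg; repeat case: ifP => _; rewrite /=; ring.
Qed.

Lemma Lg_diag (R : realType) p n (i : 'I_n) : Lg R p i i = 0.
Proof.
rewrite /Lg -(aff0 R n); apply: aff_ext => // k l; rewrite /Ngen /z2.
by rewrite sg2 mulN1r subrr.
Qed.

Lemma sum_only (R : realType) n (F : 'I_n -> R) (l : 'I_n) :
  (forall j, j != l -> F j = 0) -> \sum_j F j = F l.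
Proof. by move=> h; rewrite (bigD1 l) //= big1 ?addr0 // => j /h. Qed.

Lemma expansion (R : realType) p n a M : socond p M ->
  aff a M = \sum_i a i *: aff (ev R i) (z2 R n) +
            \sum_i \sum_j (M j i / 2) *: Lg R p i j.
Proof.
move=> hM.
under [X in _ = X + _]eq_bigr do rewrite aff_scale.
under [X in _ = _ + X]eq_bigr do (under eq_bigr do rewrite /Lg aff_scale; rewrite aff_sum).
rewrite !aff_sum aff_add; apply: aff_ext => [k|k l].
  rewrite /ev /z1; under [X in _ = _ + X]eq_bigr do (under eq_bigr do rewrite mulr0; rewrite big1_eq).
  by rewrite big1_eq addr0 -[LHS](sum_d a k); apply: eq_bigr => i _; rewrite eq_sym.
rewrite /z2; under eq_bigr do rewrite mulr0.
rewrite big1_eq add0r /Ngen.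
under eq_bigr do (under eq_bigr do rewrite mulrDr; rewrite big_split /=).
rewrite big_split /=.
rewrite (sum_only (l := l)) => [|i hi]; last first.
  by apply: big1 => j _; rewrite [l == i]eq_sym (negbTE hi) !mulr0.
rewrite (sum_only (l := k)) => [|j hj]; last by rewrite [k == j]eq_sym (negbTE hj) !mul0r mulr0.
rewrite (sum_only (l := k)) => [|i hi]; last first.
  by apply: big1 => j _; rewrite [k == i]eq_sym (negbTE hi) !mul0r !mulr0.
rewrite (sum_only (l := l)) => [|j hj]; last by rewrite [l == j]eq_sym (negbTE hj) !mulr0.
rewrite !eqxx /= [in LHS]hM [M k l]hM.
by field. Qed.

Lemma in_hpq_partial (R : realType) p q (i : 'I_(p + q)) : in_hpq (aff (ev R i) (z2 R (p + q))).
Proof.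
rewrite -partial_aff; apply: in_hpq_mem; rewrite /hpq_basis !mem_cat; apply/or3P; apply: Or33.
by apply/mapP; exists i; rewrite ?mem_enum.
Qed.

Lemma in_hpq_Lg (R : realType) p q (i j : 'I_(p + q)) : in_hpq (Lg R p i j).
Proof.
wlog hij : i j / (i <= j)%N.
  move=> h; case: (leqP i j) => [/h //|/ltnW /h hji].
  by rewrite Lg_swap; apply: in_hpqZ.
case: (ltngtP i j) hij => // [hlt _|/val_inj -> _]; last first.
  by rewrite Lg_diag; apply: in_hpq0.
apply: in_hpq_mem; rewrite /hpq_basis !mem_cat; apply/or3P.
case ha: (alpha_index p i j).
  apply: Or31; apply/mapP; exists (i, j); first by rewrite mem_enum inE.
  by rewrite /Lg sg_alpha // alpha_aff.
have hb : beta_index p i j.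
  move: ha; rewrite /alpha_index /beta_index hlt /= => /negbT. rewrite negb_or -leqNgt -ltnNge => /andP[hj hi].
  by rewrite hi hj.
apply: Or32; apply/mapP; exists (i, j); first by rewrite mem_enum inE.
by rewrite /Lg sg_beta // opprK beta_aff.
Qed.

Lemma in_hpq_so (R : realType) p q a M : socond p M -> @in_hpq R p q (aff a M).
Proof.
move=> hM; rewrite (expansion a hM); apply: in_hpqD; apply: in_hpq_sum => i _.
  by apply: in_hpqZ; apply: in_hpq_partial.
by apply: in_hpq_sum => j _; apply: in_hpqZ; apply: in_hpq_Lg.
Qed.

Definition linh (R : realType) p q (F : VF R (p + q) -> VF R (p + q)) :=
  forall a X Y, in_hpq X -> in_hpq Y -> F (a *: X + Y) = a *: F X + F Y.

Lemma cochain_linh (R : realType) p q (F : VF R (p + q) -> VF R (p + q)) :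
  is_cochain1 F -> linh F.
Proof. by move=> [_ h] a X Y hX hY; have := h a X Y hX hY; rewrite !vf_addE !vf_scaleE. Qed.

Lemma linh0 (R : realType) p q (F : VF R (p + q) -> VF R (p + q)) : linh F -> F 0 = 0.
Proof.
move=> h; have := h 1 0 0 (in_hpq0 _ _ _) (in_hpq0 _ _ _).
by rewrite scaler0 addr0 scale1r => e; apply: (addrI (F 0)); rewrite addr0 -e.
Qed.

Lemma linh_sum (R : realType) p q (F : VF R (p + q) -> VF R (p + q)) (T : Type)
  (r : seq T) (c : T -> R) (G : T -> VF R (p + q)) :
  linh F -> (forall u, in_hpq (G u)) ->
  F (\sum_(u <- r) c u *: G u) = \sum_(u <- r) c u *: F (G u).
Proof.
move=> hF hG; elim: r => [|u r IH]; first by rewrite !big_nil linh0.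
rewrite !big_cons hF ?IH //; apply: in_hpq_sum => v _; exact: in_hpqZ.
Qed.

Lemma linh_agree (R : realType) p q (F G : VF R (p + q) -> VF R (p + q)) :
  linh F -> linh G -> (forall b, b \in hpq_basis R p q -> F b = G b) ->
  forall X, in_hpq X -> F X = G X.
Proof.
move=> hF hG hb X /in_hpqE [c ->].
have hB : forall k : 'I_(size (hpq_basis R p q)), in_hpq (nth 0 (hpq_basis R p q) k).
  by move=> k; apply: in_hpq_mem; apply: mem_nth.
rewrite -(big_map (fun k : 'I__ => k) xpredT (fun k => c k *: nth 0 (hpq_basis R p q) k)).
rewrite (linh_sum _ _ hF) ?(linh_sum _ _ hG) //.
by rewrite !big_map; apply: eq_bigr => k _; rewrite hb // mem_nth.
Qed.

Lemma br_pa (R : realType) n (i : 'I_n) a M :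
  vf_bracket (aff (ev R i) (z2 R n)) (aff a M) = aff (fun k => M k i) (z2 R n).
Proof.
rewrite bracket_aff; apply: aff_ext => [k|k l]; rewrite /z2 /ev.
  under eq_bigr do rewrite mul0r subr0; by rewrite sum_d.
by apply: big1 => j _; rewrite mulr0 mul0r subrr.
Qed.

Lemma br_ap (R : realType) n (i : 'I_n) a M :
  vf_bracket (aff a M) (aff (ev R i) (z2 R n)) = aff (fun k => - M k i) (z2 R n).
Proof.
rewrite bracket_aff; apply: aff_ext => [k|k l]; rewrite /z2 /ev.
  under eq_bigr do rewrite mul0r add0r; by rewrite sumrN sum_d.
by apply: big1 => j _; rewrite mulr0 mul0r subrr.
Qed.

Lemma br_c2 (R : realType) n a M b :
  vf_bracket (aff a M) (aff b (z2 R n)) = aff (fun k => - \sum_j M k j * b j) (z2 R n).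
Proof.
rewrite bracket_aff; apply: aff_ext => [k|k l]; rewrite /z2.
  under eq_bigr do rewrite mul0r add0r; by rewrite sumrN.
by apply: big1 => j _; rewrite mulr0 mul0r subrr.
Qed.

Lemma br_c1 (R : realType) n a N b :
  vf_bracket (aff a (z2 R n)) (aff b N) = aff (fun k => \sum_j N k j * a j) (z2 R n).
Proof.
rewrite bracket_aff; apply: aff_ext => [k|k l]; rewrite /z2.
  by under eq_bigr do rewrite mul0r subr0.
by apply: big1 => j _; rewrite mulr0 mul0r subrr.
Qed.

Lemma sumN (R : realType) n (i j k : 'I_n) t (v : 'I_n -> R) :
  \sum_m Ngen i j t k m * v m = (k == j)%:R * v i + t * ((k == i)%:R * v j).
Proof.
rewrite /Ngen; under eq_bigr do rewrite mulrDl; rewrite big_split /=.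
rewrite (sum_only (l := i)) => [|m hm]; last by rewrite (negbTE hm) !mulr0 mul0r.
rewrite (sum_only (l := j)) => [|m hm]; last by rewrite (negbTE hm) !mulr0 mul0r.
by rewrite !eqxx !mulr1 mulrA.
Qed.

Lemma sumN' (R : realType) n (i j m : 'I_n) t (v : 'I_n -> R) :
  \sum_l v l * Ngen i j t l m = v j * (m == i)%:R + t * (v i * (m == j)%:R).
Proof.
rewrite /Ngen; under eq_bigr do rewrite mulrDr; rewrite big_split /=.
rewrite (sum_only (l := j)) => [|l hl]; last by rewrite (negbTE hl) !mul0r mulr0.
rewrite (sum_only (l := i)) => [|l hl]; last by rewrite (negbTE hl) !mul0r !mulr0.
by rewrite !eqxx !mul1r mulrCA.
Qed.

Lemma aff_eq0 (R : realType) n a M : @aff R n a M = 0 -> (forall k, a k = 0) /\ (forall k l, M k l = 0).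
Proof. by rewrite -(aff0 R n) => /aff_inj [h1 h2]. Qed.

Lemma socond_diag (R : realType) p n (M : 'I_n -> 'I_n -> R) k : socond p M -> M k k = 0.
Proof. move=> /(_ k k); rewrite sg2 mul1r => e; lra. Qed.

Lemma pick3 n (hn : (4 <= n)%N) (a b c : 'I_n) : exists m : 'I_n, [/\ m != a, m != b & m != c].
Proof.
have [m [hm ha hb hc]] : exists m : nat, [/\ (m < 4)%N, m != a, m != b & m != c].
  case h0: [|| 0%N == a, 0%N == b | 0%N == c]; last first.
    by exists 0%N; apply/and4P; move: h0; lia.
  case h1: [|| 1%N == a, 1%N == b | 1%N == c]; last first.
    by exists 1%N; apply/and4P; move: h1; lia.
  case h2: [|| 2%N == a, 2%N == b | 2%N == c]; last first.
    by exists 2%N; apply/and4P; move: h2; lia.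
  by exists 3%N; apply/and4P; move: h0 h1 h2; lia.
have hmn : (m < n)%N by lia.
by exists (Ordinal hmn); split; rewrite -val_eqE.
Qed.

Lemma cst_lin (R : realType) p q (X : VF R (p + q)) : in_hpq X ->
  X = aff (cst X) (lin X).
Proof. by move=> /in_hpq_aff []. Qed.

Definition JJ (R : realType) n (X : VF R n) := aff (cst X) (z2 R n).

Section Der.
Variables (R : realType) (p q : nat).
Local Notation n := (p + q).
Variable f : VF R n -> VF R n.
Hypothesis hin : forall X, in_hpq X -> in_hpq (f X).
Hypothesis hlin : linh f.
Hypothesis hder : forall g1 g2, in_hpq g1 -> in_hpq g2 ->
  vf_bracket g1 (f g2) + vf_bracket (f g1) g2 = f (vf_bracket g1 g2).
Hypothesis hn : (4 <= n)%N.

Local Notation Pd i := (aff (ev R i) (z2 R n)).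

Lemma Pd_in (i : 'I_n) : in_hpq (Pd i). Proof. exact: in_hpq_partial. Qed.
Lemma Lg_in (i j : 'I_n) : in_hpq (Lg R p i j). Proof. exact: in_hpq_Lg. Qed.

Lemma fPd_lin i k l : lin (f (Pd i)) k l = 0.
Proof.
have hS : forall i j k, lin (f (Pd j)) k i = lin (f (Pd i)) k j.
  move=> i' j k'; have := hder (Pd_in i') (Pd_in j).
  rewrite {1}(cst_lin (hin (Pd_in j))) {1}(cst_lin (hin (Pd_in i'))) br_pa br_ap aff_add.
  rewrite br_pa.
  have -> : aff (fun k => z2 R n k j) (z2 R n) = 0 by apply: aff0.
  rewrite (linh0 hlin) => /aff_eq0 [/(_ k') e _]; apply/eqP; rewrite -subr_eq0; exact/eqP.
have hA : forall i, socond p (lin (f (Pd i))) by move=> i'; case: (in_hpq_aff (hin (Pd_in i'))).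
have e1 := hS l i k; have e2 := hA l k i; have e3 := hS k l i.
have e4 := hA k i l; have e5 := hS i k l; have e6 := hA i l k.
move: e1 e2 e3 e4 e5 e6; rewrite /sg; repeat case: ifP => _; move=> *; lra.
Qed.

Definition Am (k i : 'I_n) := cst (f (Pd i)) k.

Lemma fPd i : f (Pd i) = aff (fun k => Am k i) (z2 R n).
Proof.
rewrite {1}(cst_lin (hin (Pd_in i))); apply: aff_ext => // k l; exact: fPd_lin.
Qed.

Lemma const_exp (c : 'I_n -> R) : aff c (z2 R n) = \sum_i c i *: Pd i.
Proof.
under eq_bigr do rewrite aff_scale.
rewrite aff_sum; apply: aff_ext => [k|k l]; last by rewrite /z2 big1 // => i _; rewrite mulr0.
by rewrite /ev -[LHS](sum_d c k); apply: eq_bigr => i _; rewrite eq_sym.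
Qed.

Lemma f_const (c : 'I_n -> R) :
  f (aff c (z2 R n)) = aff (fun k => \sum_i c i * Am k i) (z2 R n).
Proof.
rewrite const_exp (linh_sum _ _ hlin) => [|i]; last exact: Pd_in.
under eq_bigr do rewrite fPd aff_scale.
rewrite aff_sum; apply: aff_ext => [k|k l]; last by rewrite /z2 big1 // => i _; rewrite mulr0.
reflexivity.
Qed.

Local Notation NN i j := (Ngen i j (- (sg R p i * sg R p j))).

Lemma fLg_lin (i j k m : 'I_n) :
  lin (f (Lg R p i j)) k m = \sum_l Am k l * NN i j l m - \sum_l NN i j k l * Am l m.
Proof.
have := hder (Lg_in i j) (Pd_in m).
have eL := cst_lin (hin (Lg_in i j)).
rewrite fPd => e; rewrite [f (Lg R p i j)]eL in e.
move: e; rewrite {1 3}/Lg br_c2 br_ap br_ap f_const aff_add.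
move=> /aff_inj [/(_ k) e _]; move: e.
under [X in _ = X -> _]eq_bigr do rewrite mulNr mulrC.
rewrite sumrN => e; lra.
Qed.

Lemma fLg_linE (i j k m : 'I_n) :
  lin (f (Lg R p i j)) k m =
  (Am k j * (m == i)%:R + - (sg R p i * sg R p j) * (Am k i * (m == j)%:R)) -
  ((k == j)%:R * Am i m + - (sg R p i * sg R p j) * ((k == i)%:R * Am j m)).
Proof. by rewrite fLg_lin sumN sumN'. Qed.

Lemma fLg_so (i j : 'I_n) : socond p (lin (f (Lg R p i j))).
Proof. by case: (in_hpq_aff (hin (Lg_in i j))). Qed.

Lemma Am_diag (i j : 'I_n) : Am i i = Am j j.
Proof.
have [->//|hij] := eqVneq i j.
have := fLg_so i j j i; rewrite !fLg_linE.
move: hij => /eqP hij; dcase.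
rewrite /sg; repeat case: ifP => _; rewrite /= => *; lra.
Qed.

Lemma Am_off (k l : 'I_n) : k != l -> Am k l = - (sg R p k * sg R p l * Am l k).
Proof.
move=> hkl; have [m [hmk hml _]] := pick3 hn k l l.
have := fLg_so m l k m; rewrite !fLg_linE.
move: hkl hmk hml => /eqP ? /eqP ? /eqP ?; dcase.
rewrite /sg; repeat case: ifP => _; rewrite /= => *; lra.
Qed.

Lemma n_pos : (0 < n)%N. Proof. exact: (leq_trans _ hn). Qed.
Lemma n_1 : (1 < n)%N. Proof. exact: (leq_trans _ hn). Qed.
Definition o0 : 'I_n := Ordinal n_pos.
Definition o1 : 'I_n := Ordinal n_1.
Definition oth (i : 'I_n) : 'I_n := if i == o0 then o1 else o0.
Lemma oth_neq i : oth i != i.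
Proof.
rewrite /oth; case: (eqVneq i o0) => [->|h]; first by apply/eqP => /(congr1 val).
by rewrite eq_sym.
Qed.

Definition cc := Am o0 o0.
Definition KK (k l : 'I_n) := Am k l - (k == l)%:R * cc.

Lemma KK_so : socond p KK.
Proof.
move=> k l; rewrite /KK; have [->|hkl] := eqVneq k l.
  by rewrite /= mul1r /cc (Am_diag l o0) subrr mulr0 oppr0.
by rewrite /= !mul0r !subr0 Am_off.
Qed.

Definition bb (i j k : 'I_n) := cst (f (Lg R p i j)) k.

Lemma cst_scale c (X : VF R n) k : cst (c *: X) k = c * cst X k.
Proof. by rewrite /cst ffunE mcoeffZ. Qed.

Lemma bb_diag i k : bb i i k = 0.
Proof. by rewrite /bb Lg_diag (linh0 hlin) -(aff0 R n) aff_cst. Qed.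

Lemma f_scale c X : in_hpq X -> f (c *: X) = c *: f X.
Proof.
move=> hX; have := hlin c hX (in_hpq0 R p q); rewrite !addr0 => ->.
by rewrite (linh0 hlin) addr0.
Qed.

Lemma bb_swap i j k : bb j i k = - (sg R p i * sg R p j) * bb i j k.
Proof. rewrite /bb Lg_swap f_scale ?cst_scale ?[sg R p j * _]mulrC //; exact: in_hpq_Lg. Qed.

Lemma sum3 (F : 'I_n -> R) (a b c : 'I_n) : a != b -> a != c -> b != c ->
  (forall m, m != a -> m != b -> m != c -> F m = 0) -> \sum_m F m = F a + F b + F c.
Proof.
move=> hab hac hbc h; rewrite (bigD1 a) //= (bigD1 b) 1?eq_sym //= (bigD1 c) /=; last first.
  by rewrite [c == a]eq_sym [c == b]eq_sym hac hbc.
rewrite big1 ?addr0 ?addrA // => m /andP [/andP [hma hmb] hmc]; exact: h.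
Qed.

Lemma brLg (i j k : 'I_n) : i != j -> i != k -> j != k ->
  vf_bracket (Lg R p i j) (Lg R p j k) = Lg R p i k.
Proof.
move=> hij hik hjk; rewrite /Lg bracket_aff; apply: aff_ext => [k'|k' l].
  by rewrite /z1 big1 // => m _; rewrite !mulr0 subrr.
rewrite (sum3 hij hik hjk) => [|m hmi hmj hmk]; last first.
  by rewrite /Ngen (negbTE hmi) (negbTE hmj) (negbTE hmk) !(mul0r, mulr0, addr0, subrr).
rewrite /Ngen !eqxx [j == i]eq_sym [k == i]eq_sym [k == j]eq_sym (negbTE hij) (negbTE hik) (negbTE hjk) /=.
move: hij hik hjk => /eqP ? /eqP ? /eqP ?; dcase.
all: rewrite /sg; repeat case: ifP => _; rewrite /=; ring.
Qed.

Lemma cst_add (X Y : VF R n) k : cst (X + Y) k = cst X k + cst Y k.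
Proof. by rewrite /cst ffunE mcoeffD. Qed.

Lemma cst_brL (i j : 'I_n) b Q k :
  cst (vf_bracket (Lg R p i j) (aff b Q)) k = - \sum_m NN i j k m * b m.
Proof.
rewrite /Lg bracket_aff aff_cst /z1; under eq_bigr do rewrite mulr0 sub0r.
by rewrite sumrN.
Qed.

Lemma cst_brR (i j : 'I_n) b Q k :
  cst (vf_bracket (aff b Q) (Lg R p i j)) k = \sum_m NN i j k m * b m.
Proof.
rewrite /Lg bracket_aff aff_cst /z1; by under eq_bigr do rewrite mulr0 subr0.
Qed.

Lemma bb_tri (i j k k' : 'I_n) : i != j -> i != k -> j != k ->
  bb i k k' = ((k' == k)%:R * bb i j j + - (sg R p j * sg R p k) * ((k' == j)%:R * bb i j k))
              - ((k' == j)%:R * bb j k i + - (sg R p i * sg R p j) * ((k' == i)%:R * bb j k j)).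
Proof.
move=> hij hik hjk; have := hder (Lg_in i j) (Lg_in j k).
rewrite brLg // => e.
have := congr1 (fun X => cst X k') e; rewrite cst_add.
rewrite {1}(cst_lin (hin (Lg_in j k))) {1}(cst_lin (hin (Lg_in i j))).
rewrite cst_brL cst_brR !sumN /bb => e2; lra.
Qed.

Definition dd (i : 'I_n) := - bb i (oth i) (oth i).

Lemma bb_jj i j : i != j -> bb i j j = - dd i.
Proof.
move=> hij; rewrite /dd opprK; case: (eqVneq j (oth i)) => [->//|hj].
have hio : i != oth i by rewrite eq_sym oth_neq.
rewrite (bb_tri j hio hij); last by rewrite eq_sym.
rewrite eqxx (negbTE hj) eq_sym (negbTE hij) /=; lra.
Qed.

Lemma bb_form i j k : i != j ->
  bb i j k = - ((k == j)%:R * dd i + - (sg R p i * sg R p j) * ((k == i)%:R * dd j)).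
Proof.
move=> hij; have [->|hkj] := eqVneq k j.
  by rewrite bb_jj // eq_sym (negbTE hij) /= mul1r mul0r mulr0 addr0.
have [->|hki] := eqVneq k i.
  rewrite (bb_swap j i) bb_jj 1?eq_sym // /=.
  rewrite /sg; repeat case: ifP => _; lra.
have [m [hmi hmj hmk]] := pick3 hn i j k.
have h1 : i != m by rewrite eq_sym.
rewrite (bb_tri k h1 hij hmj) [k == m]eq_sym (negbTE hmk) (negbTE hkj) (negbTE hki) /=.
by rewrite !mul0r !mulr0 !addr0 subrr oppr0.
Qed.

Definition xx := aff dd KK.

Lemma xx_in : in_hpq xx. Proof. apply: in_hpq_so; exact: KK_so. Qed.

Lemma JJ_lin a (X Y : VF R n) : JJ (a *: X + Y) = a *: JJ X + JJ Y.
Proof.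
rewrite /JJ aff_scale aff_add; apply: aff_ext => [k|k l].
  by rewrite cst_add cst_scale.
by rewrite /z2 mulr0 addr0.
Qed.

Lemma JJ_aff a M : JJ (aff a M) = aff a (z2 R n).
Proof. by rewrite /JJ; apply: aff_ext => // k; rewrite aff_cst. Qed.

Lemma dec_Pd i : f (Pd i) = cc *: JJ (Pd i) + vf_bracket (Pd i) xx.
Proof.
rewrite fPd JJ_aff /xx br_pa aff_scale aff_add; apply: aff_ext => [k|k l].
  by rewrite /KK /ev; ring.
by rewrite /z2 mulr0 addr0.
Qed.

Lemma dec_Lg i j : i != j -> f (Lg R p i j) = cc *: JJ (Lg R p i j) + vf_bracket (Lg R p i j) xx.
Proof.
move=> hij; rewrite (cst_lin (hin (Lg_in i j))) {2}/Lg JJ_aff.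
have -> : aff (z1 R n) (z2 R n) = 0 by exact: aff0.
rewrite scaler0 add0r /Lg /xx bracket_aff; apply: aff_ext => [k|k l].
  under [RHS]eq_bigr do rewrite mulr0 sub0r.
  by rewrite sumrN sumN -/(bb i j k) bb_form.
rewrite fLg_lin (@sumrB R) sumN sumN' sumN sumN' /KK.
move: hij => /eqP ?; dcase.
all: ring.
Qed.

Lemma lt_neq (i j : 'I_n) : (i < j)%N -> i != j.
Proof. by move=> h; apply/eqP => e; move: h; rewrite e ltnn. Qed.

Lemma deriv_decomp : exists c x, in_hpq x /\
  forall g, in_hpq g -> f g = c *: JJ g + vf_bracket g x.
Proof.
exists cc, xx; split; first exact: xx_in.
apply: (linh_agree (G := fun g => cc *: JJ g + vf_bracket g xx)) => //.
  move=> a X Y hX hY /=; rewrite JJ_lin bracketL !scalerDr !scalerA mulrC.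
  by rewrite addrACA.
move=> b; rewrite /hpq_basis !mem_cat => /or3P [/mapP [ij hij ->]|/mapP [ij hij ->]|/mapP [i _ ->]].
- move: hij; rewrite mem_enum inE => h.
  have -> : vf_alpha R ij.1 ij.2 = Lg R p ij.1 ij.2 by rewrite /Lg sg_alpha // alpha_aff.
  by apply: dec_Lg; apply: lt_neq; case/andP: h.
- move: hij; rewrite mem_enum inE => h.
  have -> : vf_beta R ij.1 ij.2 = Lg R p ij.1 ij.2 by rewrite /Lg sg_beta // opprK beta_aff.
  apply: dec_Lg; apply: lt_neq; case/andP: h => h1 h2; exact: leq_trans h1 h2.
- by rewrite partial_aff; apply: dec_Pd.
Qed.
End Der.

Lemma socond_comm (R : realType) p n (M N : 'I_n -> 'I_n -> R) :
  socond p M -> socond p N ->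
  socond p (fun k l => \sum_j (N k j * M j l - M k j * N j l)).
Proof.
move=> hM hN k l; rewrite mulr_sumr -sumrN; apply: eq_bigr => j _.
rewrite (hN k j) (hM j l) (hM k j) (hN j l).
rewrite /sg; repeat case: ifP => _; ring.
Qed.

Lemma derE (R : realType) n (f : VF R n -> VF R n) g1 g2 :
  delta1 f g1 g2 = vf_zero R n ->
  vf_bracket g1 (f g2) + vf_bracket (f g1) g2 = f (vf_bracket g1 g2).
Proof. by rewrite /delta1 vf_subE vf_addE vf_zeroE => /eqP; rewrite subr_eq0 => /eqP. Qed.

Theorem lemma7p4 (R : realType) (p q : nat) (hn : (4 <= p + q)%N)
  (I : VF R (p + q) -> VF R (p + q)) :
  is_cochain1 I ->
  (forall i j : 'I_(p + q), alpha_index p i j -> I (vf_alpha R i j) = vf_zero R (p + q)) ->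
  (forall i j : 'I_(p + q), beta_index p i j -> I (vf_beta R i j) = vf_zero R (p + q)) ->
  (forall i : 'I_(p + q), I (vf_partial R i) = vf_partial R i) ->
  (* HL^0(h;h) = 0 : every 0-cocycle vanishes *)
  (forall x, in_hpq x ->
     (forall g, in_hpq g -> delta0 x g = vf_zero R (p + q)) -> x = vf_zero R (p + q)) /\
  (* HL^1(h;h) = <[I]>, one-dimensional *)
  ((forall g1 g2, in_hpq g1 -> in_hpq g2 -> delta1 I g1 g2 = vf_zero R (p + q)) /\
   ~ (exists x, in_hpq x /\ forall g, in_hpq g -> I g = delta0 x g) /\
   (forall f, is_cochain1 f ->
      (forall g1 g2, in_hpq g1 -> in_hpq g2 -> delta1 f g1 g2 = vf_zero R (p + q)) ->
      exists (c : R) (x : VF R (p + q)), in_hpq x /\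
        forall g, in_hpq g -> f g = vf_add (vf_scale c (I g)) (delta0 x g))).
Proof.
move=> hI hIa hIb hIp.
have hIlin := cochain_linh hI.
have hJlin : linh (@JJ R (p + q)) by move=> a X Y _ _; apply: JJ_lin.
have IJ : forall g, in_hpq g -> I g = JJ g.
  apply: linh_agree => // b.
  rewrite /hpq_basis !mem_cat => /or3P [/mapP [ij hij ->]|/mapP [ij hij ->]|/mapP [i _ ->]].
  - move: hij; rewrite mem_enum inE => h; rewrite hIa // vf_zeroE alpha_aff JJ_aff.
    by rewrite aff0.
  - move: hij; rewrite mem_enum inE => h; rewrite hIb // vf_zeroE beta_aff JJ_aff.
    by rewrite aff0.
  - by rewrite hIp partial_aff JJ_aff.
have o : 'I_(p + q) by exists 0%N; exact: (leq_trans _ hn).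
split.
  move=> x hx h0; have [hM ex] := in_hpq_aff hx.
  set a := cst x in ex; set M := lin x in hM ex.
  have hMz : forall k i, M k i = 0.
    move=> k i; have := h0 _ (@in_hpq_partial R p q i).
    by rewrite /delta0 vf_zeroE ex br_pa => /aff_eq0 [/(_ k) ->].
  have haz : forall i, a i = 0.
    move=> i; have [j [hji _ _]] := pick3 hn i i i.
    have := congr1 (fun X => cst X j) (h0 _ (@in_hpq_Lg R p q i j)).
    rewrite /delta0 vf_zeroE ex cst_brL sumN -(aff0 R (p + q)) aff_cst /z1 eqxx.
    rewrite (negbTE hji) /= mul0r mulr0 addr0 mul1r => /eqP; rewrite oppr_eq0 => /eqP //.
  by rewrite ex vf_zeroE -(aff0 R (p + q)); apply: aff_ext.
split.
  move=> g1 g2 h1 h2.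
  have [hM e1] := in_hpq_aff h1; have [hN e2] := in_hpq_aff h2.
  move: (cst g1) (lin g1) hM e1 => a M hM e1.
  move: (cst g2) (lin g2) hN e2 => b N hN e2.
  subst g1 g2.
  have h12 : in_hpq (vf_bracket (aff a M) (aff b N)).
    by rewrite bracket_aff; apply: in_hpq_so; apply: socond_comm.
  rewrite /delta1 !IJ // vf_subE vf_addE vf_zeroE !JJ_aff.
  rewrite br_c2 br_c1 bracket_aff JJ_aff aff_add.
  apply/eqP; rewrite subr_eq0; apply/eqP; apply: aff_ext => [k|k l].
    by rewrite (@sumrB R); lra.
  by rewrite /z2 addr0.
split.
  move=> [x [hx hI0]].
  have [hM ex] := in_hpq_aff hx.
  have := hI0 _ (@in_hpq_partial R p q o).
  rewrite -partial_aff hIp partial_aff /delta0 ex br_pa => /aff_inj [/(_ o) e _].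
  by move: e; rewrite /ev eqxx (socond_diag o hM) /= => /eqP; rewrite oner_eq0.
move=> f hf hfd.
have [c [x [hx hdec]]] := deriv_decomp hf.1 (cochain_linh hf)
  (fun g1 g2 h1 h2 => derE (hfd g1 g2 h1 h2)) hn.
exists c, x; split=> // g hg.
by rewrite hdec // vf_addE vf_scaleE IJ.
Qed.
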